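(* Let $k,l\geq 0$. In the $\mathbb{Q}$-vector space with basis the surjective maps $\sigma:[k+l]\twoheadrightarrow[p]$, $p\leq k+l$, the following identity holds: \[\sum_{\substack{\sigma'\in \mathrm{inc}(k),\ \sigma''\in \mathrm{inc}(l)\\ \tau \in \mathrm{qsh}(\max(\sigma'),\max(\sigma''))}}\frac{\tau\circ(\sigma' \otimes \sigma'')}{\sigma'!\,\sigma''!} =\sum_{\substack{\sigma\in \mathrm{sh}(k,l)\\ \tau\in \mathrm{inc}(k+l)}} \frac{\tau\circ \sigma}{\tau!}. \]
   Context: For $n\in\mathbb{N}$, $[n]=\{1,\dots,n\}$, $[0]=\emptyset$. For $k,l\geq 0$, a $(k,l)$-quasi-shuffle is a surjective map $\sigma:[k+l]\twoheadrightarrow[n]$ (for some $n$) with $\sigma(1)<\dots<\sigma(k)$ and $\sigma(k+1)<\dots<\sigma(k+l)$; $\mathrm{qsh}(k,l)$ is the set of these. $\mathrm{sh}(k,l)\subseteq\mathrm{qsh}(k,l)$ is the set of injective ones (shuffles, i.e. bijections $[k+l]\to[k+l]$). For $k\geq 0$, $\mathrm{inc}(k)$ is the set of surjective maps $\sigma:[k]\twoheadrightarrow[m]$ (some $m$) with $\sigma(1)\leq\dots\leq\sigma(k)$ (for $k=0$ it consists of the empty map, with $\max=0$). For a map $\sigma:[k]\to[m]$, $\sigma!=\prod_{i=1}^m|\sigma^{-1}(i)|!$, and $\max(\sigma)$ is its largest value ($0$ if $k=0$). For $\sigma':[k]\to[a]$ and $\sigma'':[l]\to[b]$, $\sigma'\otimes\sigma'':[k+l]\to[a+b]$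 is the map $i\mapsto\sigma'(i)$ for $i\leq k$ and $i\mapsto a+\sigma''(i-k)$ for $i>k$. *)

(* Defs.v *)
From mathcomp Require Import all_boot all_algebra.
Set Implicit Arguments. Unset Strict Implicit. Unset Printing Implicit Defensive.
Import GRing.Theory Num.Theory.

(* A map sigma : [n] -> [m] (1-indexed, as in the paper) is encoded as the
   sequence s = [:: sigma 1; ...; sigma n] : seq nat. *)

(* max(sigma): largest value, 0 for the empty map *)
Definition smax (s : seq nat) : nat := \max_(x <- s) x.

Definition is_surj (s : seq nat) : bool :=
  all (fun x => 0 < x) s && all (fun j => j \in s) (iota 1 (smax s)).

Definition incb (s : seq nat) : bool := is_surj s && sorted leq s.

Definition qshb (k l : nat) (s : seq nat) : bool :=
  [&& size s == k + l, is_surj s, sorted ltn (take k s) & sorted ltn (drop k s)].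

Definition shb (k l : nat) (s : seq nat) : bool := qshb k l s && uniq s.

Definition sfact (s : seq nat) : nat := \prod_(j <- iota 1 (smax s)) (count_mem j s)`!.

Definition tensor (s1 s2 : seq nat) : seq nat := s1 ++ [seq smax s1 + x | x <- s2].

Definition comp (t s : seq nat) : seq nat := [seq nth 0 t x.-1 | x <- s].

(* all maps [n] -> [n] (values in 1..n), each listed exactly once;
   every surjection [n] ->> [m] (m <= n) occurs here *)
Definition maps (n : nat) : seq (seq nat) :=
  [seq [seq (val (f i)).+1 | i <- enum 'I_n] | f : {ffun 'I_n -> 'I_n}].

Definition Inc (k : nat) : seq (seq nat) := [seq s <- maps k | incb s].
Definition Qsh (k l : nat) : seq (seq nat) := [seq s <- maps (k + l) | qshb k l s].
Definition Sh (k l : nat) : seq (seq nat) := [seq s <- maps (k + l) | shb k l s].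

(* Formal Q-linear combinations of maps (encoded as seq nat): coefficient functions. *)
Definition lincomb := seq nat -> rat.
Definition basis (g : seq nat) : lincomb := fun h => ((h == g)%:R)%R.

Definition lhs_sum (k l : nat) : lincomb := fun h =>
  (\sum_(s1 <- Inc k) \sum_(s2 <- Inc l) \sum_(t <- Qsh (smax s1) (smax s2))
     (((sfact s1)%:R * (sfact s2)%:R)^-1 * basis (comp t (tensor s1 s2)) h))%R.

Definition rhs_sum (k l : nat) : lincomb := fun h =>
  (\sum_(s <- Sh k l) \sum_(t <- Inc (k + l))
     ((sfact t)%:R^-1 * basis (comp t s) h))%R.

(* Main.v *)
Require Import Defs.
From mathcomp Require Import all_boot all_algebra.
From mathcomp Require Import zify ring.
From Stdlib Require Import FunctionalExtensionality.
Set Implicit Arguments. Unset Strict Implicit. Unset Printing Implicit Defensive.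
Import GRing.Theory Num.Theory.
Notation cmp := Defs.comp.

Lemma in_maps n s :
  (s \in maps n) = (size s == n) && all (fun x => 0 < x <= n) s.
Proof.
apply/idP/idP.
- case/mapP => f _ ->; rewrite size_map size_enum_ord eqxx /=.
  by apply/allP => x /mapP [i _ ->]; rewrite ltn_ord.
- case/andP => /eqP Hs /allP Ha.
  have n0 : forall i : 'I_n, 0 < n by case=> i; case: n {Hs Ha} => //.
  apply/mapP.
  exists [ffun i : 'I_n => Ordinal (ltn_pmod (nth 0 s i).-1 (n0 i))];
    first by rewrite mem_enum.
  have -> : [seq (val ([ffun i : 'I_n => Ordinal (ltn_pmod (nth 0 s i).-1 (n0 i))] i)).+1
            | i <- enum 'I_n] = [seq ((nth 0 s i).-1 %% n).+1 | i <- iota 0 n].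
    by rewrite -val_enum_ord -map_comp; apply/eq_in_map => i _ /=; rewrite ffunE.
  apply: (@eq_from_nth _ 0); first by rewrite size_map size_iota.
  move=> i; rewrite Hs => Hi.
  rewrite (nth_map 0) ?size_iota // nth_iota // add0n.
  have /andP [H1 H2] : 0 < nth 0 s i <= n by apply: Ha; apply: mem_nth; rewrite Hs.
  rewrite modn_small; first by rewrite prednK.
  by rewrite prednK.
Qed.

Lemma maps_uniq n : uniq (maps n).
Proof.
rewrite map_inj_uniq ?enum_uniq // => f g /eq_in_map H.
apply/ffunP => i; apply: val_inj; have := H i (mem_enum _ i).
by case.
Qed.

Lemma smax_ub s x : x \in s -> x <= smax s.
Proof. by move=> Hx; rewrite /smax; apply: (leq_bigmax_seq x Hx). Qed.

Lemma smax_lub s m : (forall x, x \in s -> x <= m) -> smax s <= m.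
Proof. by move=> H; apply/bigmax_leqP_seq => x Hx _; apply: H. Qed.

Lemma smax_eq_mem s s' : s =i s' -> smax s = smax s'.
Proof.
move=> H; apply/eqP; rewrite eqn_leq; apply/andP; split; apply: smax_lub => x Hx;
  apply: smax_ub; by rewrite ?H // -H.
Qed.

Lemma is_surj_eq_mem s s' : s =i s' -> is_surj s = is_surj s'.
Proof.
move=> H; rewrite /is_surj (smax_eq_mem H) (eq_all_r H).
by congr (_ && _); apply: eq_all => j; rewrite H.
Qed.

Lemma surj_size s : is_surj s -> smax s <= size s.
Proof.
case/andP => _ /allP H.
by rewrite -(size_iota 1 (smax s)); apply: uniq_leq_size; [apply: iota_uniq|].
Qed.

Lemma smax_iota n : smax (iota 1 n) = n.
Proof.
apply/eqP; rewrite eqn_leq; apply/andP; split.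
  by apply: smax_lub => x; rewrite mem_iota; lia.
by case: n => // n; apply: smax_ub; rewrite mem_iota; lia.
Qed.

Lemma surj_iota s : is_surj s -> s =i iota 1 (smax s).
Proof.
case/andP => /allP H1 /allP H2 x; rewrite mem_iota.
apply/idP/idP; last by move=> Hx; apply: H2; rewrite mem_iota.
by move=> Hx; have := H1 _ Hx; have := smax_ub Hx; lia.
Qed.

Definition P (w : seq nat) : nat := \prod_(x <- undup w) (count_mem x w)`!.

Lemma P_any r w : uniq r -> {subset w <= r} ->
  P w = \prod_(x <- r) (count_mem x w)`!.
Proof.
move=> Ur Hs; rewrite [RHS](bigID (fun x => x \in w)) /=.
rewrite [X in _ = _ * X]big1 ?muln1; last first.
  by move=> x /count_memPn ->.
rewrite -big_filter; apply: perm_big; apply: uniq_perm.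
- exact: undup_uniq.
- exact: filter_uniq.
by move=> x; rewrite mem_undup mem_filter; case Hx: (x \in w) => //=; rewrite Hs.
Qed.

Lemma P_perm w w' : perm_eq w w' -> P w = P w'.
Proof.
move=> H; rewrite [RHS](P_any (undup_uniq w)); last first.
  by move=> x; rewrite mem_undup (perm_mem H).
by rewrite /P; apply: eq_bigr => x _; rewrite (permP H).
Qed.

Lemma P_rcons w x : P (rcons w x) = P w * (count_mem x w).+1.
Proof.
have U := undup_uniq (x :: w).
rewrite (P_any (r := undup (x :: w)) U); last first.
  by move=> y; rewrite mem_undup mem_rcons.
rewrite (P_any (r := undup (x :: w)) U); last first.
  by move=> y Hy; rewrite mem_undup inE Hy orbT.
have Hx : x \in undup (x :: w) by rewrite mem_undup mem_head.
rewrite (bigD1_seq x Hx U) (bigD1_seq x Hx U).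
rewrite (eq_bigr (fun y => (count_mem y w)`!)); last first.
  move=> y Hy; rewrite eq_sym in Hy.
  by rewrite -cats1 count_cat /= (negbTE Hy) /= !addn0.
rewrite -cats1 count_cat /= eqxx addn1 factS.

by rewrite [RHS]mulnC mulnA.
Qed.

Lemma P_map f s : {in s &, injective f} -> P (map f s) = P s.
Proof.
move=> Hf; rewrite (P_any (r := map f (undup s))).
- rewrite big_map /P big_seq [RHS]big_seq; apply: eq_bigr => x; rewrite mem_undup => Hx.
  rewrite count_map; congr (_ `!); apply: eq_in_count => y Hy /=.
  by apply/eqP/eqP => [/(Hf _ _ Hy Hx)|->].
- by rewrite map_inj_in_uniq ?undup_uniq // => y z; rewrite !mem_undup; exact: Hf.
- by move=> y /mapP [z Hz ->]; apply: map_f; rewrite mem_undup.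
Qed.

Lemma sfact_P s : all (fun x => 0 < x) s -> sfact s = P s.
Proof.
move=> /allP H; rewrite /sfact (P_any (r := iota 1 (smax s))) ?iota_uniq //.
by move=> x Hx; rewrite mem_iota; have := H _ Hx; have := smax_ub Hx; lia.
Qed.

Lemma P_gt0 s : 0 < P s.
Proof. by rewrite /P; elim: (undup s) => [|x r IH]; rewrite ?big_nil ?big_cons ?muln_gt0 ?fact_gt0. Qed.

Lemma pl1 (y n : nat) : 0 < y <= n -> y.-1 < n.
Proof. lia. Qed.

Lemma comp_cat t s1 s2 : cmp t (s1 ++ s2) = cmp t s1 ++ cmp t s2.
Proof. exact: map_cat. Qed.

Lemma sorted_undup u : sorted leq u -> sorted ltn (undup u).
Proof.
move=> H; rewrite ltn_sorted_uniq_leq undup_uniq /=.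
exact: (subseq_sorted leq_trans (undup_subseq u) H).
Qed.

Definition stdz (u : seq nat) := [seq (index x (undup u)).+1 | x <- u].

Lemma G t' s : sorted ltn t' -> all (fun y => 0 < y <= size t') s ->
  (forall j, 0 < j <= size t' -> j \in s) -> sorted leq s ->
  [/\ sorted leq [seq nth 0 t' y.-1 | y <- s],
      undup [seq nth 0 t' y.-1 | y <- s] = t' &
      stdz [seq nth 0 t' y.-1 | y <- s] = s].
Proof.
move=> Slt Hall Hsurj Ss.
have Ut : uniq t' by apply: (sorted_uniq ltn_trans ltnn).
have St : sorted leq t' by move: Slt; rewrite ltn_sorted_uniq_leq => /andP[].
have Sw : sorted leq [seq nth 0 t' y.-1 | y <- s].
  apply: (homo_sorted_in (e := leq) (P := [pred y | 0 < y <= size t'])) => // y z.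
  rewrite !inE => Hy Hz Hyz; apply: (sorted_leq_nth leq_trans leqnn 0 St);
    rewrite ?inE; lia.
have Eu : undup [seq nth 0 t' y.-1 | y <- s] = t'.
  apply: (irr_sorted_eq ltn_trans ltnn) => //; first exact: sorted_undup.
  move=> x; rewrite mem_undup; apply/mapP/idP.
  - case=> y Hy ->; apply: mem_nth; have /= := allP Hall _ Hy; lia.
  - move=> Hx; exists (index x t').+1; last by rewrite /= nth_index.
    by apply: Hsurj; rewrite index_mem Hx.
split => //.
rewrite /stdz Eu -map_comp -[RHS]map_id; apply/eq_in_map => y Hy /=.
have /= Hy' := allP Hall _ Hy.
by rewrite index_uniq ?pl1 // prednK //; case/andP: Hy'.
Qed.

Lemma std_props u : sorted leq u ->
  [/\ size (stdz u) = size u, all (fun x => 0 < x <= size (undup u)) (stdz u),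
      (forall j, 0 < j <= size (undup u) -> j \in stdz u),
      sorted leq (stdz u) & smax (stdz u) = size (undup u)].
Proof.
move=> Su; have Sud := sorted_undup Su.
have Hall : all (fun x => 0 < x <= size (undup u)) (stdz u).
  by apply/allP => x /mapP [y Hy ->]; rewrite /= index_mem mem_undup Hy.
have Hsurj : forall j, 0 < j <= size (undup u) -> j \in stdz u.
  move=> j Hj; apply/mapP; exists (nth 0 (undup u) j.-1).
    by rewrite -mem_undup; apply: mem_nth; lia.
  rewrite index_uniq ?undup_uniq; lia.
split => //.
- by rewrite size_map.
- apply: (homo_sorted_in (e := leq) (P := mem u)) => //.
  move=> x y Hx Hy Hxy; rewrite leqNgt; apply/negP => H.
  have := sorted_ltn_nth ltn_trans 0 Sud (index y (undup u)) (index x (undup u)).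
  rewrite !inE !index_mem !mem_undup Hx Hy => /(_ isT isT H).
  rewrite !nth_index ?mem_undup //; lia.
- apply/eqP; rewrite eqn_leq; apply/andP; split.
    by apply: smax_lub => x Hx; have /= := allP Hall _ Hx; lia.
  case E: (size (undup u)) => [|m] //; apply: smax_ub; apply: Hsurj; lia.
Qed.

Lemma comp_std1 u t2 : cmp (undup u ++ t2) (stdz u) = u.
Proof.
rewrite /cmp /stdz -map_comp -[RHS]map_id; apply/eq_in_map => x Hx /=.
by rewrite nth_cat index_mem mem_undup Hx nth_index // mem_undup.
Qed.

Lemma comp_std2 t1 v :
  cmp (t1 ++ undup v) [seq size t1 + x | x <- stdz v] = v.
Proof.
rewrite /cmp /stdz -!map_comp -[RHS]map_id; apply/eq_in_map => x Hx /=.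
rewrite addnS /= nth_cat ltnNge leq_addr /= addKn nth_index //.
by rewrite mem_undup.
Qed.

Lemma all_natP (a : pred nat) (s : seq nat) :
  reflect (forall x : nat, x \in s -> a x) (all a s).
Proof. exact: allP. Qed.

Definition good k l h := [&& size h == k + l, is_surj h,
  sorted leq (take k h) & sorted leq (drop k h)].

Definition Fval k l h : rat :=
  if good k l h then (((P (take k h) * P (drop k h))%:R)^-1)%R else 0%R.

Lemma surj_pos s : is_surj s -> all (fun x => 0 < x) s.
Proof. by case/andP. Qed.

Lemma surj_all s : is_surj s -> forall j, 0 < j <= smax s -> j \in s.
Proof. by case/andP => _ /allP H j Hj; apply: H; rewrite mem_iota; lia. Qed.

Lemma hit_char k l h s1 s2 t : s1 \in Inc k -> s2 \in Inc l ->
  t \in Qsh (smax s1) (smax s2) ->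
  (h == cmp t (tensor s1 s2)) = [&& good k l h, s1 == stdz (take k h),
     s2 == stdz (drop k h) & t == undup (take k h) ++ undup (drop k h)].
Proof.
rewrite !mem_filter !in_maps.
move=> /andP [/andP [Is1 Ss1] /andP [/eqP Sz1 Va1]].
move=> /andP [/andP [Is2 Ss2] /andP [/eqP Sz2 Va2]].
move=> /andP [/and4P [/eqP Szt It St1 St2] _].
set a := smax s1 in Szt St1 St2 *; set b := smax s2 in Szt St2 *.
apply/eqP/idP.
- move=> Eh.
  have Hp1 := allP (surj_pos Is1); have Hp2 := allP (surj_pos Is2).
  have Sza : size (take a t) = a by rewrite size_takel // Szt leq_addr.
  have Szb : size (drop a t) = b by rewrite size_drop Szt addKn.
  have E1 : cmp t s1 = [seq nth 0 (take a t) y.-1 | y <- s1].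
    apply/eq_in_map => y Hy; rewrite nth_take //.
    by apply: pl1; rewrite (Hp1 _ Hy) smax_ub.
  have E2 : cmp t [seq a + x | x <- s2] = [seq nth 0 (drop a t) y.-1 | y <- s2].
    rewrite /cmp -map_comp; apply/eq_in_map => y Hy /=; rewrite nth_drop.
    by have := Hp2 _ Hy; case: y {Hy} => // y _; rewrite addnS.
  have A1 : all (fun y => 0 < y <= size (take a t)) s1.
    by apply/all_natP => y Hy; rewrite Sza Hp1 // smax_ub.
  have A2 : all (fun y => 0 < y <= size (drop a t)) s2.
    by apply/all_natP => y Hy; rewrite Szb Hp2 // smax_ub.
  have [G11 G12 G13] := G St1 A1 (fun j => let: H := surj_all Is1 (j := j) in
    ltac:(rewrite Sza; exact: H)) Ss1.
  have [G21 G22 G23] := G St2 A2 (fun j => let: H := surj_all Is2 (j := j) in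
    ltac:(rewrite Szb; exact: H)) Ss2.
  rewrite -E1 in G11 G12 G13; rewrite -E2 in G21 G22 G23.
  have Hh : h = cmp t s1 ++ cmp t [seq a + x | x <- s2] by rewrite Eh /tensor comp_cat.
  have Sz : size (cmp t s1) = k by rewrite size_map.
  have Eu : take k h = cmp t s1 by rewrite Hh take_size_cat.
  have Ev : drop k h = cmp t [seq a + x | x <- s2] by rewrite Hh drop_size_cat.
  rewrite Eu Ev G12 G22 G13 G23 cat_take_drop !eqxx !andbT.
  rewrite /good Eu Ev G11 G21 !andbT.
  have -> : size h = k + l by rewrite Hh size_cat !size_map Sz1 Sz2.
  rewrite eqxx /=; rewrite (@is_surj_eq_mem h t) // => x.
  by rewrite Hh -[in RHS](cat_take_drop a t) -G12 -G22 !mem_cat !mem_undup.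
- case/and4P => Hg /eqP -> /eqP -> /eqP ->.
  case/and4P: Hg => _ _ Su Sv.
  have [_ _ _ _ E] := std_props Su.
  by rewrite /tensor E comp_cat comp_std1 comp_std2 cat_take_drop.
Qed.

Lemma exist_canon k l h : good k l h ->
  [/\ stdz (take k h) \in Inc k, stdz (drop k h) \in Inc l &
      undup (take k h) ++ undup (drop k h) \in
        Qsh (smax (stdz (take k h))) (smax (stdz (drop k h)))].
Proof.
case/and4P => /eqP Sh Ih Su Sv.
have [Zu Au Hu Ou Mu] := std_props Su.
have [Zv Av Hv Ov Mv] := std_props Sv.
have Szu : size (take k h) = k by rewrite size_takel // Sh leq_addr.
have Szv : size (drop k h) = l by rewrite size_drop Sh addKn.
have Inc_ok : forall w m, size w = m -> sorted leq w -> stdz w \in Inc m.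
  move=> w m Hw Sw; have [Zw Aw Hw' Ow Mw] := std_props Sw.
  rewrite mem_filter in_maps Zw Hw eqxx /incb Ow /is_surj !andbT /=.
  apply/andP; split; first (apply/andP; split).
  - by apply/all_natP => x Hx; have /= /andP[] := allP Aw _ Hx.
  - by apply/all_natP => j; rewrite mem_iota Mw => Hj; apply: Hw'; lia.
  - apply/all_natP => x Hx; have /= := allP Aw _ Hx; have := size_undup w; rewrite Hw.
    by move=> H1 /andP [-> H2]; rewrite (leq_trans H2 H1).
split; [exact: Inc_ok | exact: Inc_ok |].
set ct := _ ++ _.
have Ect : ct =i h by move=> x; rewrite -(cat_take_drop k h) !mem_cat !mem_undup.
have Ict : is_surj ct by rewrite (is_surj_eq_mem Ect).
rewrite mem_filter in_maps Mu Mv /qshb size_cat eqxx Ict take_size_cat //.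
rewrite drop_size_cat // !sorted_undup //=.
apply/all_natP => x Hx; apply/andP; split; first exact: (allP (surj_pos Ict) _ Hx).
by rewrite -size_cat; exact: leq_trans (smax_ub Hx) (surj_size Ict).
Qed.

Lemma Inc_uniq k : uniq (Inc k).
Proof. exact/filter_uniq/maps_uniq. Qed.

Lemma Qsh_uniq k l : uniq (Qsh k l).
Proof. exact/filter_uniq/maps_uniq. Qed.

Lemma P_std u : P (stdz u) = P u.
Proof.
rewrite /stdz P_map // => x y Hx Hy /= [] E.
by apply: (index_inj 0 _ _ E); rewrite mem_undup.
Qed.

Lemma lhs_val k l h : lhs_sum k l h = Fval k l h.
Proof.
rewrite /lhs_sum /basis.
under eq_big_seq => s1 Hs1.
  under eq_big_seq => s2 Hs2.
    under eq_big_seq => t Ht do rewrite (hit_char h Hs1 Hs2 Ht).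
    over.
  over.
rewrite /Fval; case Hg: (good k l h) => /=; last first.
  by apply: big1 => s1 _; apply: big1 => s2 _; apply: big1 => t _; rewrite mulr0.
have [H1 H2 H3] := exist_canon Hg.
rewrite (bigD1_seq _ H1 (Inc_uniq k)) /= [X in (_ + X)%R]big1 ?addr0; last first.
  move=> s1 /negbTE Hne; apply: big1 => s2 _; apply: big1 => t _.
  by rewrite Hne /= mulr0.
rewrite (bigD1_seq _ H2 (Inc_uniq l)) /= [X in (_ + X)%R]big1 ?addr0; last first.
  move=> s2 /negbTE Hne; apply: big1 => t _.
  by rewrite eqxx Hne /= mulr0.
rewrite (bigD1_seq _ H3 (Qsh_uniq _ _)) /= [X in (_ + X)%R]big1 ?addr0; last first.
  move=> t /negbTE Hne.
  by rewrite !eqxx Hne /= mulr0.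
rewrite !eqxx /= mulr1 -natrM.
case/and4P: Hg => _ _ Su Sv.
have [_ Au _ _ _] := std_props Su; have [_ Av _ _ _] := std_props Sv.
rewrite !sfact_P ?P_std //.
- by apply/all_natP => x Hx; have /= /andP[] := allP Av _ Hx.
- by apply/all_natP => x Hx; have /= /andP[] := allP Au _ Hx.
Qed.

Definition shp k l s := [&& perm_eq s (iota 1 (k + l)), sorted ltn (take k s)
  & sorted ltn (drop k s)].

Lemma perm_iota_maps n s : perm_eq s (iota 1 n) -> s \in maps n.
Proof.
move=> H; rewrite in_maps (perm_size H) size_iota eqxx /=.
by apply/all_natP => x; rewrite (perm_mem H) mem_iota; lia.
Qed.

Lemma shb_shp k l s : s \in maps (k + l) -> shb k l s = shp k l s.
Proof.
rewrite in_maps => /andP [/eqP Sz Va].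
rewrite /shb /qshb /shp Sz eqxx /=.
apply/idP/idP.
- case/andP => /and3P [Is S1 S2] U; rewrite S1 S2 andbT.
  have E := surj_iota Is.
  have P1 : perm_eq s (iota 1 (smax s)) by apply: uniq_perm; rewrite ?iota_uniq.
  have Em : smax s = k + l by have := perm_size P1; rewrite size_iota Sz.
  by rewrite andbT -Em.
- case/and3P => Hp -> ->; rewrite (perm_uniq Hp) iota_uniq andbT andbT.
  rewrite (is_surj_eq_mem (perm_mem Hp)) /is_surj smax_iota.
  rewrite andbT; apply/andP; split; apply/allP => x //; by rewrite mem_iota => /andP[].
Qed.

Lemma Sh_count k l (Q : pred (seq nat)) :
  count Q (Sh k l) = count (fun s => shp k l s && Q s) (maps (k + l)).
Proof.
rewrite count_filter; apply: eq_in_count => s Hs /=.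
by rewrite (shb_shp Hs) andbC.
Qed.

Lemma cmp_iota t : cmp t (iota 1 (size t)) = t.
Proof.
rewrite -(addn0 1) iotaDl /cmp -map_comp.
rewrite -[RHS](mkseq_nth 0 t) /mkseq; apply: eq_map => x /=.
by rewrite add0n.
Qed.

Lemma cmp_perm t s : perm_eq s (iota 1 (size t)) -> perm_eq (cmp t s) t.
Proof. by move=> H; rewrite -{2}(cmp_iota t); apply: perm_map. Qed.

Lemma sort_uniqP t h : sorted leq t -> perm_eq t h -> t = sort leq h.
Proof.
move=> St Ph; apply: (sorted_eq leq_trans anti_leq St (sort_sorted leq_total h)).
by rewrite perm_sym perm_sort perm_sym.
Qed.

Definition Ncount k l h :=
  count (fun s => shp k l s && (cmp (sort leq h) s == h)) (maps (k + l)).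


Lemma count_bij (T1 T2 : eqType) (r1 : seq T1) (r2 : seq T2)
  (p1 : pred T1) (p2 : pred T2) (f : T2 -> T1) :
  uniq r1 -> uniq r2 ->
  (forall y1 y2, y1 \in r2 -> p2 y1 -> y2 \in r2 -> p2 y2 -> f y1 = f y2 -> y1 = y2) ->
  (forall y, y \in r2 -> p2 y -> f y \in r1 /\ p1 (f y)) ->
  (forall x, x \in r1 -> p1 x -> exists y, [/\ y \in r2, p2 y & x = f y]) ->
  count p1 r1 = count p2 r2.
Proof.
move=> U1 U2 Hi Hf Hs.
rewrite -!size_filter -(size_map f (filter p2 r2)); apply: perm_size.
apply: uniq_perm; first exact: filter_uniq.
  rewrite map_inj_in_uniq ?filter_uniq // => y1 y2.
  by rewrite !mem_filter => /andP [? ?] /andP [? ?]; apply: Hi.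
move=> x; rewrite mem_filter; apply/andP/mapP.
  case=> H1 H2; have [y [Hy1 Hy2 ->]] := Hs x H2 H1.
  by exists y => //; rewrite mem_filter Hy2.
case=> y; rewrite mem_filter => /andP [H1 H2] ->.
by have [? ?] := Hf y H2 H1.
Qed.

Lemma count_split (T : Type) (p q : pred T) r :
  count p r = count (fun x => p x && q x) r + count (fun x => p x && ~~ q x) r.
Proof.
elim: r => [|x r IH] //=; rewrite IH; case: (p x); case: (q x) => /=; lia.
Qed.

Lemma sorted_rcons_rel (e : rel nat) s x : sorted e s -> all (fun y => e y x) s ->
  sorted e (rcons s x).
Proof.
case: s => [|y s] //= Hs Ha; rewrite rcons_path Hs /=.
have Ha' : all (fun z => e z x) (y :: s) by [].
exact: (allP Ha' _ (mem_last y s)).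
Qed.

Lemma sorted_le_last s x : sorted leq (rcons s x) -> all (fun y => y <= x) (rcons s x).
Proof.
rewrite -rev_sorted rev_rcons /= => H.
have := order_path_min (leT := fun a b => b <= a) (fun a b c h1 h2 => leq_trans h2 h1) H.
by rewrite all_rev -cats1 all_cat /= leqnn => ->.
Qed.

Lemma perm_iotaS s n : perm_eq s (iota 1 n.+1) = perm_eq s (n.+1 :: iota 1 n).
Proof.
have E : iota 1 n.+1 = rcons (iota 1 n) n.+1.
  by have := iotaD 1 n 1; rewrite addn1 => ->; rewrite -cats1 /= add1n.
rewrite E; apply/idP/idP => H; apply: (perm_trans H); by rewrite ?perm_rcons // perm_sym perm_rcons.
Qed.

Lemma sort_rcons_max w w0 m : perm_eq w (rcons w0 m) -> all (fun x => x <= m) w0 ->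
  sort leq w = rcons (sort leq w0) m.
Proof.
move=> Hp Ha; apply: (sorted_eq leq_trans anti_leq (sort_sorted leq_total w)).
  apply: sorted_rcons_rel; first exact: (sort_sorted leq_total).
  by apply/all_natP => x; rewrite mem_sort; apply: (allP Ha).
have H2 : perm_eq (rcons w0 m) (rcons (sort leq w0) m).
  by rewrite perm_rcons perm_sym perm_rcons perm_cons perm_sort.
by rewrite perm_sort (perm_trans Hp H2).
Qed.

Lemma cmp_rcons_low T1 M s : all (fun x => 0 < x <= size T1) s ->
  cmp (rcons T1 M) s = cmp T1 s.
Proof.
move=> /all_natP H; apply/eq_in_map => x Hx; rewrite nth_rcons.
have /andP [H1 H2] := H x Hx.
by rewrite (pl1 (n := size T1)) // H1.
Qed.

Definition ins k (s : seq nat) x := take k s ++ x :: drop k s.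

Lemma ins_props k s x : k <= size s ->
  [/\ take k (ins k s x) = take k s, take k.+1 (ins k s x) = rcons (take k s) x,
      drop k.+1 (ins k s x) = drop k s, nth 0 (ins k s x) k = x &
      perm_eq (ins k s x) (x :: s)].
Proof.
move=> Hk; have Sz : size (take k s) = k by rewrite size_takel.
rewrite /ins; split.
- by rewrite take_size_cat.
- by rewrite take_cat Sz ltnNge leqnSn /= subSnn /= take0 cats1.
- by rewrite drop_cat Sz ltnNge leqnSn /= subSnn /= drop0.
- by rewrite nth_cat Sz ltnn subnn.
- by rewrite -[X in perm_eq _ (_ :: X)](cat_take_drop k s) (perm_catCA _ [:: x]).
Qed.

Lemma rcons_props k (s : seq nat) (x : nat) : k <= size s ->
  take k (rcons s x) = take k s /\ drop k (rcons s x) = rcons (drop k s) x.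
Proof. by move=> Hk; rewrite -cats1 takel_cat // cats1 (drop_rcons Hk). Qed.

Lemma shp_perm k l s : shp k l s -> perm_eq s (iota 1 (k + l)).
Proof. by case/and3P. Qed.

Lemma shp_size k l s : shp k l s -> size s = k + l.
Proof. by move/shp_perm/perm_size; rewrite size_iota. Qed.

Lemma shp_vals k l s : shp k l s -> all (fun x => 0 < x <= k + l) s.
Proof. by move/shp_perm => H; apply/all_natP => x; rewrite (perm_mem H) mem_iota; lia. Qed.

Lemma shpk0 k s : shp k 0 s = (s == iota 1 k).
Proof.
apply/idP/eqP => [H|->].
  have Sz := shp_size H; case/and3P: H => Hp S1 _.
  rewrite addn0 in Hp Sz; rewrite take_oversize ?Sz // in S1.
  apply: (irr_sorted_eq ltn_trans ltnn) => //; first exact: iota_ltn_sorted.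
  exact: perm_mem.
by rewrite /shp addn0 perm_refl take_oversize ?size_iota // drop_oversize ?size_iota
  // iota_ltn_sorted.
Qed.

Lemma shp0l l s : shp 0 l s = (s == iota 1 l).
Proof.
apply/idP/eqP => [H|->].
  case/and3P: H => Hp _ S2; rewrite drop0 in S2.
  apply: (irr_sorted_eq ltn_trans ltnn) => //; first exact: iota_ltn_sorted.
  exact: perm_mem.
by rewrite /shp add0n perm_refl drop0 take0 iota_ltn_sorted.
Qed.

Lemma sorted_rconsK (e : rel nat) t x : sorted e (rcons t x) -> sorted e t.
Proof. by rewrite -cats1 => /(take_sorted (size t)); rewrite take_size_cat. Qed.

Lemma bijA k' l x (Q Q' : pred (seq nat)) : x = (k' + l).+1 ->
  (forall s', shp k' l s' -> Q (ins k' s' x) = Q' s') ->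
  count (fun s => shp k'.+1 l s && Q s && (nth 0 s k' == x)) (maps x) =
  count (fun s' => shp k' l s' && Q' s') (maps (k' + l)).
Proof.
move=> Ex HQ; apply: (count_bij (f := fun s' => ins k' s' x)); try exact: maps_uniq.
- move=> y1 y2 _ /andP [H1 _] _ /andP [H2 _] E.
  have L1 : k' <= size y1 by rewrite (shp_size H1) leq_addr.
  have L2 : k' <= size y2 by rewrite (shp_size H2) leq_addr.
  have [A1 _ B1 _ _] := ins_props x L1; have [A2 _ B2 _ _] := ins_props x L2.
  by rewrite -(cat_take_drop k' y1) -(cat_take_drop k' y2) -A1 -A2 -B1 -B2 E.
- move=> y _ /andP [Hs HQy].
  have L : k' <= size y by rewrite (shp_size Hs) leq_addr.
  have [A1 A2 A3 A4 A5] := ins_props x L.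
  have Va := shp_vals Hs.
  have Hsh : shp k'.+1 l (ins k' y x).
    case/and3P: Hs => Hp S1 S2.
    rewrite /shp addSn perm_iotaS -Ex (perm_trans A5) ?perm_cons // A2 A3 S2 andbT.
    apply: sorted_rcons_rel => //; apply/all_natP => z /mem_take Hz.
    by have /= := allP Va z Hz; rewrite Ex; lia.
  split; last by rewrite Hsh HQ // HQy A4 eqxx.
  by apply: perm_iota_maps; have := shp_perm Hsh; rewrite addSn -Ex.
- move=> s _ /andP [/andP [Hs HQs] /eqP Hn].
  have Sz : size s = x by rewrite (shp_size Hs) Ex addSn.
  set y := take k' s ++ drop k'.+1 s.
  have Lk : k' < size s by rewrite Sz Ex; lia.
  have Sk : size (take k' s) = k' by rewrite size_takel // ltnW.
  have Ey : s = ins k' y x.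
    rewrite /ins /y take_size_cat // drop_size_cat // -Hn -drop_nth //.
    by rewrite cat_take_drop.
  have Ly : k' <= size y by rewrite size_cat Sk leq_addr.
  have [A1 A2 A3 A4 A5] := ins_props x Ly.
  rewrite -Ey in A1 A2 A3 A5.
  have Hy : shp k' l y.
    case/and3P: Hs => Hp S1 S2.
    rewrite addSn perm_iotaS -Ex in Hp.
    rewrite /shp -A3 S2 andbT.
    have Hp2 : perm_eq (x :: y) (x :: iota 1 (k' + l)).
      by apply: perm_trans Hp; rewrite perm_sym.
    rewrite perm_cons in Hp2; rewrite Hp2 /=.
    rewrite A2 in S1; exact: sorted_rconsK S1.
  exists y; split => //; first exact: perm_iota_maps (shp_perm Hy).
  by rewrite Hy -HQ // -Ey.
Qed.

Lemma no_after (t : seq nat) m i j : sorted ltn t -> all (fun z => z <= m) t ->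
  nth 0 t i = m -> i < j < size t -> False.
Proof.
move=> St Ha Hi /andP [Hij Hj].
have := sorted_ltn_nth ltn_trans 0 St i j; rewrite !inE (ltn_trans Hij Hj) Hj.
move=> /(_ isT isT Hij); rewrite Hi.
have /= := allP Ha _ (mem_nth 0 Hj); lia.
Qed.

Lemma shp_last k' l' s : shp k'.+1 l'.+1 s -> nth 0 s k' != (k'.+1 + l').+1 ->
  nth 0 s (k'.+1 + l') = (k'.+1 + l').+1.
Proof.
set x := (k'.+1 + l').+1 => Hs Hk.
have Sz : size s = x by rewrite (shp_size Hs) /x addnS.
have Va := shp_vals Hs.
have Hx : x \in s by rewrite (perm_mem (shp_perm Hs)) mem_iota /x; lia.
have Hi : index x s < x by rewrite -[X in _ < X]Sz index_mem.
have Ni : nth 0 s (index x s) = x by rewrite nth_index.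
have Vle : all (fun z => z <= x) s.
  by apply/all_natP => z Hz; have /= := allP Va z Hz; rewrite /x; lia.
case/and3P: Hs => _ S1 S2.
case: (ltnP (index x s) k'.+1) => H1.
  case: (ltnP (index x s) k') => H2.
    exfalso; apply: (no_after (t := take k'.+1 s) (m := x) (i := index x s) (j := k')).
    - exact: S1.
    - by apply/all_natP => z /mem_take; apply: (allP Vle).
    - by rewrite nth_take.
    - rewrite H2 size_takel ?Sz /x; lia.
  have E : index x s = k' by lia.
  by rewrite -E Ni eqxx in Hk.
have Nd : nth 0 (drop k'.+1 s) (index x s - k'.+1) = x by rewrite nth_drop subnKC.
case: (ltnP (index x s - k'.+1) l') => H2.
  exfalso; apply: (no_after (t := drop k'.+1 s) (m := x) (i := index x s - k'.+1) (j := l')).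
  - exact: S2.
  - by apply/all_natP => z /mem_drop; apply: (allP Vle).
  - exact: Nd.
  - by rewrite H2 size_drop Sz /x; lia.
have E : index x s = k'.+1 + l'.
  by move: (index x s) Hi H1 H2 => i; rewrite /x; lia.
by rewrite -E Ni.
Qed.

Lemma bijB k' l' x (Q Q' : pred (seq nat)) : x = (k'.+1 + l').+1 ->
  (forall s', shp k'.+1 l' s' -> Q (rcons s' x) = Q' s') ->
  count (fun s => shp k'.+1 l'.+1 s && Q s && (nth 0 s k' != x)) (maps x) =
  count (fun s' => shp k'.+1 l' s' && Q' s') (maps (k'.+1 + l')).
Proof.
move=> Ex HQ; apply: (count_bij (f := fun s' => rcons s' x)); try exact: maps_uniq.
- by move=> y1 y2 _ _ _ _ E; apply: (rcons_injl x).
- move=> y _ /andP [Hs HQy].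
  have Sz := shp_size Hs.
  have L : k'.+1 <= size y by rewrite Sz leq_addr.
  have [R1 R2] := rcons_props x L.
  have Va := shp_vals Hs.
  have Hsh : shp k'.+1 l'.+1 (rcons y x).
    case/and3P: Hs => Hp S1 S2.
    rewrite /shp addnS perm_iotaS -Ex perm_rcons perm_cons Hp R1 S1 R2 /=.
    apply: sorted_rcons_rel => //; apply/all_natP => z /mem_drop Hz.
    by have /= := allP Va z Hz; rewrite Ex; lia.
  split.
    by apply: perm_iota_maps; have := shp_perm Hsh; rewrite addnS -Ex.
  rewrite Hsh HQ // HQy nth_rcons Sz /=.
  have : k' < k'.+1 + l' by lia.
  move=> ->; have /= := allP Va (nth 0 y k') (mem_nth 0 (leq_trans (leqnn _) L)).
  rewrite Ex; lia.
- move=> s _ /andP [/andP [Hs HQs] Hn].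
  have Hl : nth 0 s (k'.+1 + l') = x by rewrite Ex; apply: shp_last; rewrite -?Ex.
  have Sz : size s = x by rewrite (shp_size Hs) Ex addnS.
  set y := take (k'.+1 + l') s.
  have Ey : s = rcons y x.
    rewrite /y -cats1 -Hl -{1}(cat_take_drop (k'.+1 + l') s); congr (_ ++ _).
    rewrite (drop_nth 0); last by rewrite Sz Ex.
    by rewrite drop_oversize // Sz Ex.
  have Szy : size y = k'.+1 + l' by rewrite size_takel // Sz Ex.
  have L : k'.+1 <= size y by rewrite Szy leq_addr.
  have [R1 R2] := rcons_props x L.
  rewrite -Ey in R1 R2.
  have Hy : shp k'.+1 l' y.
    case/and3P: Hs => Hp S1 S2.
    rewrite addnS perm_iotaS -Ex Ey perm_rcons perm_cons in Hp.
    by rewrite /shp Hp -R1 S1 /=; rewrite R2 in S2; exact: sorted_rconsK S2.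
  exists y; split => //; first exact: perm_iota_maps (shp_perm Hy).
  by rewrite Hy -HQ // -Ey.
Qed.

Lemma P_nil : P [::] = 1.
Proof. by rewrite /P /= big_nil. Qed.

Lemma N_base_r u : sorted leq u -> Ncount (size u) 0 (u ++ [::]) = 1.
Proof.
move=> Su; rewrite /Ncount cats0 (sorted_sort leq_trans Su).
rewrite (eq_in_count (a2 := pred1 (iota 1 (size u)))) => [|s Hs].
  by rewrite count_uniq_mem ?maps_uniq // perm_iota_maps // addn0.
by rewrite shpk0 /=; case: eqP => //= ->; rewrite cmp_iota eqxx.
Qed.

Lemma N_base_l v : sorted leq v -> Ncount 0 (size v) ([::] ++ v) = 1.
Proof.
move=> Sv; rewrite /Ncount cat0s (sorted_sort leq_trans Sv).
rewrite (eq_in_count (a2 := pred1 (iota 1 (size v)))) => [|s Hs].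
  by rewrite count_uniq_mem ?maps_uniq // perm_iota_maps // add0n.
by rewrite shp0l /=; case: eqP => //= ->; rewrite cmp_iota eqxx.
Qed.

Lemma nth_cmp T s i : i < size s -> nth 0 (cmp T s) i = nth 0 T (nth 0 s i).-1.
Proof. by move=> Hi; rewrite /cmp (nth_map 0). Qed.

Lemma all_sub (p : pred nat) s t : {subset t <= s} -> all p s -> all p t.
Proof. by move=> H /allP A; apply/allP => z /H /A. Qed.

Lemma cmp_ins T1 M s k : all (fun z => 0 < z <= size T1) s ->
  cmp (rcons T1 M) (ins k s (size T1).+1) = cmp T1 (take k s) ++ M :: cmp T1 (drop k s).
Proof.
move=> A; rewrite /ins comp_cat.
have -> : cmp (rcons T1 M) ((size T1).+1 :: drop k s) = M :: cmp (rcons T1 M) (drop k s).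
  by rewrite /cmp /= nth_rcons ltnn eqxx.
rewrite !cmp_rcons_low //; apply: (all_sub _ A) => z; [exact: mem_drop|exact: mem_take].
Qed.

Lemma cmp_rcons_top T1 M s : all (fun z => 0 < z <= size T1) s ->
  cmp (rcons T1 M) (rcons s (size T1).+1) = rcons (cmp T1 s) M.
Proof.
move=> A; rewrite -(cats1 s) comp_cat cmp_rcons_low //.
by rewrite -(cats1 (cmp T1 s)) /cmp /= nth_rcons ltnn eqxx.
Qed.

Section Step.
Variables (u' v' : seq nat) (a b : nat).
Let u := rcons u' a.
Let v := rcons v' b.
Let k' := size u'.
Let l' := size v'.
Let M := maxn a b.
Let x := k'.+1 + l'.+1.
Hypothesis Su : sorted leq u.
Hypothesis Sv : sorted leq v.

Let Au : all (fun y => y <= a) u := sorted_le_last Su.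
Let Av : all (fun y => y <= b) v := sorted_le_last Sv.

Lemma TA : a = M -> sort leq (u ++ v) = rcons (sort leq (u' ++ v)) M.
Proof.
move=> aM; apply: sort_rcons_max.
  by rewrite -aM; apply/permP => p; rewrite /u -!cats1 !count_cat /=; lia.
rewrite all_cat; apply/andP; split.
  apply/all_natP => y Hy; rewrite -aM; apply: (allP Au); by rewrite /u mem_rcons inE Hy orbT.
apply/all_natP => y Hy; have := allP Av y Hy; rewrite /M /=; lia.
Qed.

Lemma TB : b = M -> sort leq (u ++ v) = rcons (sort leq (u ++ v')) M.
Proof.
move=> bM; apply: sort_rcons_max.
  by rewrite /v -rcons_cat -bM.
rewrite all_cat; apply/andP; split.
  apply/all_natP => y Hy; have := allP Au y Hy; rewrite /M /=; lia.
apply/all_natP => y Hy; rewrite -bM; apply: (allP Av); by rewrite /v mem_rcons inE Hy orbT.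
Qed.

Let Szu : size u = k'.+1. Proof. by rewrite size_rcons. Qed.
Let Szv : size v = l'.+1. Proof. by rewrite size_rcons. Qed.

Lemma nth_h_a : nth 0 (u ++ v) k' = a.
Proof. by rewrite nth_cat Szu ltnSn /u nth_rcons ltnn eqxx. Qed.

Lemma nth_h_b : nth 0 (u ++ v) (k'.+1 + l') = b.
Proof.
by rewrite nth_cat Szu ltnNge leq_addr /= addKn /v nth_rcons ltnn eqxx.
Qed.

Lemma CA : count (fun s => shp k'.+1 l'.+1 s && (cmp (sort leq (u ++ v)) s == u ++ v)
                         && (nth 0 s k' == x)) (maps x) =
  if a == M then Ncount k' l'.+1 (u' ++ v) else 0.
Proof.
case: eqP => aM.
  rewrite (bijA (Q' := fun s' => cmp (sort leq (u' ++ v)) s' == u' ++ v)) //.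
  move=> s' Hs'; rewrite (TA aM).
  have ST : size (sort leq (u' ++ v)) = k' + l'.+1 by rewrite size_sort size_cat Szv.
  have Ex : x = (size (sort leq (u' ++ v))).+1 by rewrite ST /x addSn.
  have Va := shp_vals Hs'; rewrite -ST in Va.
  rewrite Ex cmp_ins // /u cat_rcons.
  rewrite -[X in _ = (cmp _ X == _)](cat_take_drop k' s') comp_cat.
  have Sk : size (cmp (sort leq (u' ++ v)) (take k' s')) = size u'.
    by rewrite size_map size_takel // (shp_size Hs') leq_addr.
  by rewrite !eqseq_cat // eqseq_cons aM eqxx.
have bM : b = M by move: aM; rewrite /M; lia.
rewrite (eq_in_count (a2 := pred0)) ?count_pred0 // => s _ /=.
apply/negbTE/negP => /andP [/andP [Hs /eqP E] /eqP Hn].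
have := congr1 (nth 0 ^~ k') E; rewrite nth_h_a nth_cmp; last first.
  by rewrite (shp_size Hs); lia.
rewrite Hn (TB bM) nth_rcons size_sort size_cat Szu /x.
have -> : (k'.+1 + l'.+1).-1 = k'.+1 + l' by lia.
by rewrite ltnn eqxx => E'; apply: aM; rewrite E'.
Qed.

Lemma CB : count (fun s => shp k'.+1 l'.+1 s && (cmp (sort leq (u ++ v)) s == u ++ v)
                         && ~~ (nth 0 s k' == x)) (maps x) =
  if b == M then Ncount k'.+1 l' (u ++ v') else 0.
Proof.
case: eqP => bM.
  rewrite (bijB (Q' := fun s' => cmp (sort leq (u ++ v')) s' == u ++ v')) //.
    by rewrite /x addnS.
  move=> s' Hs'; rewrite (TB bM).
  have ST : size (sort leq (u ++ v')) = k'.+1 + l' by rewrite size_sort size_cat Szu.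
  have Ex : x = (size (sort leq (u ++ v'))).+1 by rewrite ST /x addnS.
  have Va := shp_vals Hs'; rewrite -ST in Va.
  by rewrite Ex cmp_rcons_top // /v -rcons_cat eqseq_rcons bM eqxx andbT.
have aM : a = M by move: bM; rewrite /M; lia.
rewrite (eq_in_count (a2 := pred0)) ?count_pred0 // => s _ /=.
apply/negbTE/negP => /andP [/andP [Hs /eqP E] Hn].
have Hx : x = (k'.+1 + l').+1 by rewrite /x addnS.
have Hl := shp_last Hs (etrans (esym (congr1 (fun y => nth 0 s k' != y) Hx)) Hn).
have := congr1 (nth 0 ^~ (k'.+1 + l')) E; rewrite nth_h_b nth_cmp; last first.
  by rewrite (shp_size Hs); lia.
rewrite Hl (TA aM) nth_rcons size_sort size_cat Szv /=.
have -> : k'.+1 + l' = k' + l'.+1 by lia.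
by rewrite ltnn eqxx => E'; apply: bM; rewrite E'.
Qed.

Lemma step (IHA : Ncount k' l'.+1 (u' ++ v) * (P u' * P v) = P (u' ++ v))
  (IHB : Ncount k'.+1 l' (u ++ v') * (P u * P v') = P (u ++ v')) :
  Ncount k'.+1 l'.+1 (u ++ v) * (P u * P v) = P (u ++ v).
Proof.
rewrite {1}/Ncount (count_split _ (fun s => nth 0 s k' == x)).
rewrite CA CB.
have Pu : P u = P u' * (count_mem a u').+1 by rewrite /u P_rcons.
have Pv : P v = P v' * (count_mem b v').+1 by rewrite /v P_rcons.
have Ph1 : P (u ++ v) = P (u' ++ v) * (count_mem a (u' ++ v)).+1.
  rewrite -P_rcons; apply: P_perm.
  by apply/permP => p; rewrite /u -!cats1 !count_cat /=; lia.
have Ph2 : P (u ++ v) = P (u ++ v') * (count_mem b (u ++ v')).+1.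
  by rewrite /v -rcons_cat P_rcons.
have EA : Ncount k' l'.+1 (u' ++ v) * (P u * P v) = P (u' ++ v) * (count_mem a u').+1.
  by rewrite Pu -IHA; ring.
have EB : Ncount k'.+1 l' (u ++ v') * (P u * P v) = P (u ++ v') * (count_mem b v').+1.
  by rewrite Pv -IHB; ring.
case: (eqVneq a M) => aM; case: (eqVneq b M) => bM; rewrite mulnDl.
- rewrite EA EB.
  have ab : b = a by rewrite aM bM.
  have C1 : count_mem a (u' ++ v) = count_mem a u' + (count_mem a v').+1.
    by rewrite count_cat /v -cats1 count_cat /= ab eqxx; lia.
  have C2 : count_mem b (u ++ v') = (count_mem a u').+1 + count_mem a v'.
    by rewrite count_cat /u -cats1 count_cat /= ab eqxx; lia.
  rewrite C1 in Ph1; rewrite C2 in Ph2.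
  have XY : P (u' ++ v) = P (u ++ v').
    apply/eqP; rewrite -(@eqn_pmul2r (count_mem a u' + (count_mem a v').+1).+1) //.
    apply/eqP; rewrite -Ph1 Ph2; congr (_ * _); lia.
  by rewrite -XY Ph1 ab; ring.
- rewrite EA addn0 Ph1; congr (_ * _).
  have C : count_mem a v = 0.
    apply/count_memPn/negP => H; have := allP Av a H; move: bM; rewrite /M; lia.
  by rewrite count_cat C addn0.
- rewrite EB add0n Ph2; congr (_ * _).
  have C : count_mem b u = 0.
    apply/count_memPn/negP => H; have := allP Au b H; move: aM; rewrite /M; lia.
  by rewrite count_cat C add0n.
- by exfalso; move: aM bM; rewrite /M; lia.
Qed.

End Step.

Lemma count_main' n : forall u v, size u + size v = n -> sorted leq u ->
  sorted leq v -> Ncount (size u) (size v) (u ++ v) * (P u * P v) = P (u ++ v).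
Proof.
elim: n => [|n IH] u v.
  case: u => //; case: v => // _ _ _.
  by rewrite (N_base_l (v := [::])) // P_nil.
case/lastP: u => [|u' a] Hsz Su Sv.
  by rewrite (N_base_l Sv) P_nil !mul1n.
case/lastP: v => [|v' b] in Hsz Sv *.
  by rewrite (N_base_r Su) P_nil muln1 mul1n cats0.
rewrite !size_rcons; apply: step => //.
- rewrite -(size_rcons v' b); apply: IH => //.
  + by move: Hsz; rewrite !size_rcons; lia.
  + exact: sorted_rconsK Su.
- rewrite -(size_rcons u' a); apply: IH => //.
  + by move: Hsz; rewrite !size_rcons; lia.
  + exact: sorted_rconsK Sv.
Qed.
Lemma count_main k l u v : size u = k -> size v = l -> sorted leq u ->
  sorted leq v -> Ncount k l (u ++ v) * (P u * P v) = P (u ++ v).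
Proof.
move=> <- <- Su Sv; exact: count_main' (erefl _) Su Sv.
Qed.

Lemma Inc_dec n t : t \in Inc n ->
  [/\ size t = n, sorted leq t, is_surj t & all (fun x => 0 < x <= n) t].
Proof. by rewrite mem_filter in_maps => /andP [/andP [I S] /andP [/eqP Z A]]. Qed.

Lemma Sh_dec k l s : s \in Sh k l -> shp k l s.
Proof.
rewrite mem_filter => /andP [H1 H2]; by rewrite -shb_shp.
Qed.

Lemma cmp_sorted_block T s : sorted leq T -> sorted ltn s ->
  all (fun x => 0 < x <= size T) s -> sorted leq (cmp T s).
Proof.
move=> St Ss A.
apply: (homo_sorted_in (e := ltn) (P := [pred y | 0 < y <= size T])) => // x y.
rewrite !inE => Hx Hy Hxy; apply: (sorted_leq_nth leq_trans leqnn 0 St);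
  rewrite ?inE; lia.
Qed.

Lemma hit_good k l h T s : T \in Inc (k + l) -> s \in Sh k l -> cmp T s = h ->
  good k l h.
Proof.
move=> /Inc_dec [ZT ST IT AT] /Sh_dec /and3P [Hp S1 S2] E.
have Hp' : perm_eq s (iota 1 (size T)) by rewrite ZT.
have Va : all (fun x => 0 < x <= size T) s.
  by apply/all_natP => x; rewrite (perm_mem Hp') mem_iota; lia.
rewrite /good -E size_map (perm_size Hp) size_iota eqxx /=.
rewrite (is_surj_eq_mem (perm_mem (cmp_perm Hp'))) IT /= /cmp -map_take -map_drop.
rewrite !cmp_sorted_block //.
- by apply/all_natP => x /mem_drop Hx; apply: (allP Va).
- by apply/all_natP => x /mem_take Hx; apply: (allP Va).
Qed.

Lemma good_Inc k l h : good k l h -> sort leq h \in Inc (k + l).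
Proof.
case/and4P => /eqP Sh Ih _ _.
have Pm : perm_eq (sort leq h) h by rewrite perm_sort.
rewrite mem_filter in_maps /incb (is_surj_eq_mem (perm_mem Pm)) Ih /=.
rewrite sort_sorted ?(perm_size Pm) ?Sh ?eqxx //=; last exact: leq_total.
apply/all_natP => x; rewrite (perm_mem Pm) => Hx; apply/andP; split.
  exact: (allP (surj_pos Ih) _ Hx).
by rewrite -Sh; exact: leq_trans (smax_ub Hx) (surj_size Ih).
Qed.

Lemma sum_count (T' : Type) (r : seq T') (p : pred T') :
  (\sum_(x <- r) (p x)%:R)%R = ((count p r)%:R)%R :> rat.
Proof.
elim: r => [|x r IH]; first by rewrite big_nil.
by rewrite big_cons IH /= natrD.
Qed.

Lemma rhs_val k l h : rhs_sum k l h = Fval k l h.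
Proof.
rewrite /rhs_sum /basis.
set T := sort leq h.
have key : forall s t, s \in Sh k l -> t \in Inc (k + l) ->
    (h == cmp t s) = (t == T) && (cmp T s == h).
  move=> s t Hs Ht; have [Zt St _ _] := Inc_dec Ht.
  have /and3P [Hp _ _] := Sh_dec Hs.
  apply/eqP/andP => [E|[/eqP -> /eqP ->]] //.
  have Et : t = T.
    rewrite /T E; apply: sort_uniqP => //; rewrite perm_sym; apply: cmp_perm.
    by rewrite Zt.
  by split; rewrite -Et ?E eqxx.
under eq_big_seq => s Hs do under eq_big_seq => t Ht do rewrite (key s t Hs Ht).
have inner : forall b : bool,
  (\sum_(t <- Inc (k + l)) ((sfact t)%:R^-1 * ((t == T) && b)%:R))%R =
  if T \in Inc (k + l) then ((sfact T)%:R^-1 * b%:R)%R else 0%R :> rat.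
  move=> b; case HT: (T \in Inc (k + l)).
    rewrite (bigD1_seq _ HT (Inc_uniq _)) /= eqxx big1 ?addr0 //.
    by move=> t /negbTE ->; rewrite mulr0.
  rewrite big_seq big1 // => t Ht; case: eqP => [E|_]; last by rewrite mulr0.
  by rewrite -E Ht in HT.
under eq_bigr => s _ do rewrite inner.
rewrite /Fval; case HT: (T \in Inc (k + l)); last first.
  rewrite big1 //; case Hg: (good k l h) => //.
  by have := good_Inc Hg; rewrite -/T HT.
rewrite -big_distrr /= sum_count.
case Hg: (good k l h); last first.
  rewrite (eq_in_count (a2 := pred0)) ?count_pred0 ?mulr0 // => s Hs /=.
  by apply/negbTE/negP => /eqP E; have := hit_good HT Hs E; rewrite Hg.
rewrite Sh_count.
have := Hg; case/and4P => /eqP Szh _ Su Sv.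
have Szu : size (take k h) = k by rewrite size_takel // Szh leq_addr.
have Szv : size (drop k h) = l by rewrite size_drop Szh addKn.
have := count_main Szu Szv Su Sv.
rewrite cat_take_drop => E.
have -> : count (fun s => shp k l s && (cmp T s == h)) (maps (k + l)) = Ncount k l h by [].
rewrite sfact_P; last first.
  by have [_ _ IT _] := Inc_dec HT; exact: surj_pos.
have Pm : perm_eq (sort leq h) h by rewrite perm_sort.
rewrite (P_perm Pm) -E natrM.
have H1 := P_gt0 (take k h); have H2 := P_gt0 (drop k h).
have Hn : Ncount k l h != 0.
  by apply/eqP => Z; move: E; rewrite Z mul0n => E; have := P_gt0 h; rewrite -E.
field.
by rewrite !pnatr_eq0 Hn -!lt0n H1 H2.
Qed.

Theorem mainTheorem1 (k l : nat) : lhs_sum k l = rhs_sum k l.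
Proof.
apply: functional_extensionality => h.
by rewrite lhs_val rhs_val.
Qed.
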